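(* Let $(S,\mathcal C)$ be a connectoid and $T$ a normal tree of $(S,\mathcal C)$. For every end $\omega$ of the tree $T$, let $R_\omega$ be the unique ray in $\omega$ starting at the root of $T$. Then $V(R_\omega)$ converges to an end $\eta(\omega)\in\Omega(S,\mathcal C)$, and the map $\omega\mapsto\eta(\omega)$ is a bijection between the ends of $T$ and the ends of $(S,\mathcal C)$ lying in the closure of $V(T)$.
   Context: A connectoid is given by a set $S$ and a set $\mathcal F$ of finite subsets of $S$ such that (i) $F\cup F'\in\mathcal F$ whenever $F,F'\in\mathcal F$ and $F\cap F'\neq\emptyset$, and (ii) $\emptyset\in\mathcal F$ and $\{s\}\in\mathcal F$ for every $s\in S$. A set $C\subseteq S$ is connected if for all $x,y\in C$ there is $F\in\mathcal F$ with $F\subseteq C$ and $x,y\in F$; $\mathcal C$ is the set of connected sets. For $S'\subseteq S$, a component of $S'$ is a maximal connected subset, and $\mathcal K(S')$ is the set of components of $S'$. ''Almost all'' means all but finitely many. A necklace is a connected set $N$ for which there is a family $(H_n)_{n\in\mathbb N}$ of finite connected sets with $N=\bigcup_n H_n$ and $H_i\cap H_j\neq\emptyset$ iff $|i-j|\le 1$. For finite $X\subseteq S$, the $X$-tail of $N$ is the unique element of $\mathcal K(N\setminus X)$ containing almost all elements of $N$. Two necklaces are equivalent if for every finite $X\subseteq S$ their $X$-tails lie in the same element of $\mathcal K(S\setminus X)$. An end is an equivalence class of necklaces; $\Omega(S,\mathcal C)$ is the set of ends; $K(X,\omega)$ is the element of $\mathcal K(S\setminus X)$ containing the $X$-tails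 of the necklaces in $\omega$. An infinite set $Y\subseteq S$ converges to an end $\nu$ if $K(X,\nu)$ contains almost all elements of $Y$ for every finite $X\subseteq S$. An end $\nu$ lies in the closure of a set $U\subseteq S$ if $K(X,\nu)\cap U\neq\emptyset$ for every finite $X\subseteq S$. For a rooted tree $T$ with tree order $\le_T$ and $t\in V(T)$, let $\mathrm{Down}^\circ_T(t)=\{x\in V(T):x<_T t\}$. A weak normal tree of $(S,\mathcal C)$ is a rooted undirected tree $T$ with $V(T)\subseteq S$ such that (1) for every $C\in\mathcal C$ and every two $\le_T$-incomparable $u,v\in C\cap V(T)$ there is $w\in C$ with $w\le_T u$ and $w\le_T v$, and (2) for all $u\le_T v$ in $V(T)$ there is $C\in\mathcal C$ containing $u,v$ with $C\cap\mathrm{Down}^\circ_T(u)=\emptyset$. It is a normal tree if additionally for every rooted ray $R$ of $T$ some necklace contains almost all vertices of $R$. Ends of $T$ are its graph-theoretic ends (equivalence classes of rays). *)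

(* Defs.v *)
From Stdlib Require Import List Classical.
Import ListNotations.

Definition subset {V : Type} (A B : V -> Prop) : Prop := forall x, A x -> B x.
Definition finite_set {V : Type} (A : V -> Prop) : Prop :=
  exists l : list V, forall x, A x -> In x l.
Definition setminus {V : Type} (A B : V -> Prop) : V -> Prop := fun x => A x /\ ~ B x.

Record connectoid {V : Type} (F : (V -> Prop) -> Prop) : Prop := {
  cn_fin : forall A, F A -> finite_set A;
  cn_union : forall A B, F A -> F B -> (exists x, A x /\ B x) ->
             F (fun x => A x \/ B x);
  cn_empty : F (fun _ => False);
  cn_single : forall s, F (fun x => x = s) }.

(* C is connected (C belongs to the set \mathcal C) *)
Definition connected {V : Type} (F : (V -> Prop) -> Prop) (C : V -> Prop) : Prop :=
  forall x y, C x -> C y -> exists A, F A /\ subset A C /\ A x /\ A y.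

Definition component {V : Type} (F : (V -> Prop) -> Prop) (S' K : V -> Prop) : Prop :=
  subset K S' /\ connected F K /\
  forall K', subset K' S' -> connected F K' -> subset K K' -> subset K' K.

Definition necklace {V : Type} (F : (V -> Prop) -> Prop) (N : V -> Prop) : Prop :=
  connected F N /\
  exists H : nat -> V -> Prop,
    (forall n, finite_set (H n) /\ connected F (H n)) /\
    (forall x, N x <-> exists n, H n x) /\
    (forall i j, (exists x, H i x /\ H j x) <-> (i <= S j /\ j <= S i)).

Definition tail {V : Type} (F : (V -> Prop) -> Prop) (N X K : V -> Prop) : Prop :=
  component F (setminus N X) K /\ finite_set (setminus N K).

Definition necklace_equiv {V : Type} (F : (V -> Prop) -> Prop) (N N' : V -> Prop) : Prop :=
  forall X, finite_set X -> forall K K', tail F N X K -> tail F N' X K' ->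
    exists D, component F (fun x => ~ X x) D /\ subset K D /\ subset K' D.

Definition cend {V : Type} (F : (V -> Prop) -> Prop) : Type :=
  { E : (V -> Prop) -> Prop |
    exists N, necklace F N /\
      forall N', E N' <-> (necklace F N' /\ necklace_equiv F N N') }.

Definition KX {V : Type} (F : (V -> Prop) -> Prop) (X : V -> Prop) (om : cend F)
  (D : V -> Prop) : Prop :=
  component F (fun x => ~ X x) D /\
  forall N, proj1_sig om N -> forall K, tail F N X K -> subset K D.

Definition converges {V : Type} (F : (V -> Prop) -> Prop) (Y : V -> Prop) (om : cend F) : Prop :=
  ~ finite_set Y /\
  forall X, finite_set X -> exists D, KX F X om D /\ finite_set (setminus Y D).

Definition in_closure {V : Type} (F : (V -> Prop) -> Prop) (U : V -> Prop) (om : cend F) : Prop :=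
  forall X, finite_set X -> exists D, KX F X om D /\ exists u, D u /\ U u.

Fixpoint chain {V : Type} (adj : V -> V -> Prop) (l : list V) : Prop :=
  match l with
  | x :: t => match t with
              | y :: _ => adj x y /\ chain adj t
              | nil => True
              end
  | nil => True
  end.

Definition tpath {V : Type} (adj : V -> V -> Prop) (x y : V) (p : list V) : Prop :=
  hd_error p = Some x /\ last p x = y /\ NoDup p /\ chain adj p.

Definition is_cycle {V : Type} (adj : V -> V -> Prop) (c : list V) : Prop :=
  3 <= length c /\ NoDup c /\ chain adj c /\
  exists x, hd_error c = Some x /\ adj (last c x) x.

Record rooted_tree {V : Type} (VT : V -> Prop) (adj : V -> V -> Prop) (root : V) : Prop := {
  rt_sym : forall x y, adj x y -> adj y x;
  rt_irrefl : forall x, ~ adj x x;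
  rt_dom : forall x y, adj x y -> VT x /\ VT y;
  rt_root : VT root;
  rt_conn : forall v, VT v -> exists p, tpath adj root v p;
  rt_acyc : forall c, ~ is_cycle adj c }.

Definition tle {V : Type} (adj : V -> V -> Prop) (root x y : V) : Prop :=
  exists p, tpath adj root y p /\ In x p.

Definition down_open {V : Type} (VT : V -> Prop) (adj : V -> V -> Prop) (root u : V) : V -> Prop :=
  fun x => VT x /\ tle adj root x u /\ x <> u.

Definition ray {V : Type} (adj : V -> V -> Prop) (R : nat -> V) : Prop :=
  (forall n m, R n = R m -> n = m) /\ forall n, adj (R n) (R (S n)).

Definition ray_set {V : Type} (R : nat -> V) : V -> Prop := fun x => exists n, R n = x.

Definition ray_equiv {V : Type} (adj : V -> V -> Prop) (R R' : nat -> V) : Prop :=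
  forall X : V -> Prop, finite_set X ->
    exists n m p, (forall k, n <= k -> ~ X (R k)) /\ (forall k, m <= k -> ~ X (R' k)) /\
      tpath adj (R n) (R' m) p /\ (forall z, In z p -> ~ X z).

Definition tend {V : Type} (adj : V -> V -> Prop) : Type :=
  { E : (nat -> V) -> Prop |
    exists R, ray adj R /\ forall R', E R' <-> (ray adj R' /\ ray_equiv adj R R') }.

Definition weak_normal_tree {V : Type} (F : (V -> Prop) -> Prop) (VT : V -> Prop)
  (adj : V -> V -> Prop) (root : V) : Prop :=
  rooted_tree VT adj root /\
  (forall C u v, connected F C -> C u -> C v -> VT u -> VT v ->
     ~ tle adj root u v -> ~ tle adj root v u ->
     exists w, C w /\ tle adj root w u /\ tle adj root w v) /\
  (forall u v, VT u -> VT v -> tle adj root u v ->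
     exists C, connected F C /\ C u /\ C v /\
       forall x, C x -> ~ down_open VT adj root u x).

Definition normal_tree {V : Type} (F : (V -> Prop) -> Prop) (VT : V -> Prop)
  (adj : V -> V -> Prop) (root : V) : Prop :=
  weak_normal_tree F VT adj root /\
  forall R, ray adj R -> R 0 = root ->
    exists N, necklace F N /\ finite_set (setminus (ray_set R) N).

(* Main.v *)
Require Import Defs.
From Stdlib Require Import List Classical Lia Arith.
From Stdlib Require Import ClassicalEpsilon FunctionalExtensionality PropExtensionality ProofIrrelevance.
Import ListNotations.

Lemma last_in {A} (l : list A) d : l <> [] -> In (last l d) l.
Proof.
  induction l as [|a l IH]; intros H; [congruence|].
  destruct l as [|b l]; simpl; [auto|]. right. apply IH. discriminate.
Qed.

Lemma last_cons_indep {A} (a : A) l d d' : last (a :: l) d = last (a :: l) d'.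
Proof. revert a. induction l as [|b l IH]; intros a; [reflexivity|]. change (last (b :: l) d = last (b :: l) d'). apply IH. Qed.

Lemma last_app_ne {A} (l1 l2 : list A) d : l2 <> [] -> last (l1 ++ l2) d = last l2 d.
Proof.
  induction l1 as [|a l1 IH]; intros H; simpl; auto.
  destruct l1; simpl.
  - destruct l2; [congruence| reflexivity].
  - rewrite <- IH by auto. simpl. reflexivity.
Qed.

Lemma nth_last' {A} (l : list A) d : l <> [] -> nth (length l - 1) l d = last l d.
Proof.
  induction l as [|a l IH]; intros H; [congruence|].
  destruct l as [|b l]; [reflexivity|].
  simpl length. replace (S (S (length l)) - 1) with (S (length (b :: l) - 1)) by (simpl; lia).
  change (nth (length (b :: l) - 1) (b :: l) d = last (b :: l) d). apply IH. discriminate.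
Qed.

Lemma NoDup_app_disj {A} (l1 l2 : list A) a : NoDup (l1 ++ l2) -> In a l1 -> In a l2 -> False.
Proof.
  induction l1 as [|b l1 IH]; simpl; intros H H1 H2; [auto|].
  inversion H as [|? ? Hn Hd]; subst. destruct H1 as [E|E]; [subst|eauto].
  apply Hn. apply in_or_app; auto.
Qed.

Lemma fin_sub {V} (A B : V -> Prop) : finite_set B -> (forall x, A x -> B x) -> finite_set A.
Proof. intros [l Hl] H. exists l. auto. Qed.

Lemma fin_union {V} (A B : V -> Prop) :
  finite_set A -> finite_set B -> finite_set (fun x => A x \/ B x).
Proof.
  intros [l1 H1] [l2 H2]. exists (l1 ++ l2). intros x [Hx|Hx]; apply in_or_app; auto.
Qed.

Lemma fin_list {V} (l : list V) : finite_set (fun x => In x l).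
Proof. exists l. auto. Qed.

Lemma fin_upto {V} (H : nat -> V -> Prop) : (forall n, finite_set (H n)) ->
  forall n0, finite_set (fun x => exists n, n < n0 /\ H n x).
Proof.
  intros HH n0. induction n0.
  - exists []. intros x [n [Hn _]]. lia.
  - apply fin_sub with (B := fun x => (exists n, n < n0 /\ H n x) \/ H n0 x).
    + apply fin_union; auto.
    + intros x [n [Hn Hx]]. destruct (Nat.eq_dec n n0); [subst; auto|].
      left. exists n. split; auto. lia.
Qed.

Lemma inj_avoid_list {V} (f : nat -> V) (l : list V) :
  (forall n m, f n = f m -> n = m) -> exists n0, forall k, n0 <= k -> ~ In (f k) l.
Proof.
  intros Hinj. induction l as [|a l IH].
  - exists 0. intros k _ [].
  - destruct IH as [n0 Hn0].
    destruct (classic (exists i, f i = a)) as [[i Hi]|Hn].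
    + exists (max n0 (S i)). intros k Hk [E|E].
      * rewrite <- Hi in E. apply Hinj in E. lia.
      * apply (Hn0 k); auto. lia.
    + exists n0. intros k Hk [E|E].
      * apply Hn. eauto.
      * apply (Hn0 k); auto.
Qed.

Lemma inj_avoid {V} (f : nat -> V) (Y : V -> Prop) : finite_set Y ->
  (forall n m, f n = f m -> n = m) -> exists n0, forall k, n0 <= k -> ~ Y (f k).
Proof.
  intros [l Hl] Hinj. destruct (inj_avoid_list f l Hinj) as [n0 Hn0].
  exists n0. intros k Hk Hy. apply (Hn0 k Hk). auto.
Qed.

Lemma inj_infinite {V} (f : nat -> V) : (forall n m, f n = f m -> n = m) ->
  ~ finite_set (fun x => exists n, f n = x).
Proof.
  intros Hinj Hf. destruct (inj_avoid f _ Hf Hinj) as [n0 Hn0].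
  apply (Hn0 n0); eauto.
Qed.

Section Conn.
Variable V : Type.
Variable F : (V -> Prop) -> Prop.
Hypothesis HF : connectoid F.

Lemma conn_union (A B : V -> Prop) : connected F A -> connected F B ->
  (exists z, A z /\ B z) -> connected F (fun x => A x \/ B x).
Proof.
  intros HA HB [z [Az Bz]] x y Hx Hy.
  assert (Hxz : forall w, A w \/ B w -> exists C, F C /\ subset C (fun x => A x \/ B x) /\ C w /\ C z).
  { intros w [Aw|Bw].
    - destruct (HA w z Aw Az) as [C [FC [SC [Cw Cz]]]]. exists C; repeat split; auto.
      intros u Hu; left; auto.
    - destruct (HB w z Bw Bz) as [C [FC [SC [Cw Cz]]]]. exists C; repeat split; auto.
      intros u Hu; right; auto. }
  destruct (Hxz x Hx) as [C1 [F1 [S1 [C1x C1z]]]].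
  destruct (Hxz y Hy) as [C2 [F2 [S2 [C2y C2z]]]].
  exists (fun u => C1 u \/ C2 u). split; [|split; [|split]].
  - apply (cn_union F HF); eauto.
  - intros u [Hu|Hu]; auto.
  - auto.
  - auto.
Qed.

Lemma comp_absorb (S' D K : V -> Prop) : component F S' D -> connected F K ->
  subset K S' -> (exists x, K x /\ D x) -> subset K D.
Proof.
  intros [HDS [HDc HDm]] HK HKS [x [Kx Dx]].
  assert (H := HDm (fun y => D y \/ K y)).
  intros y Ky. apply H.
  - intros u [Hu|Hu]; auto.
  - apply conn_union; eauto.
  - intros u Hu; auto.
  - auto.
Qed.

Lemma comp_exists (S' K : V -> Prop) (a : V) : connected F K -> subset K S' -> K a ->
  exists D, component F S' D /\ subset K D.
Proof.
  intros HK HKS Ka.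
  exists (fun x => exists B, connected F B /\ subset B S' /\ B a /\ B x).
  split; [split; [|split]|].
  - intros x [B [_ [HB [_ Bx]]]]. auto.
  - intros x y [Bx [HBx [SBx [Bxa Bxx]]]] [By [HBy [SBy [Bya Byy]]]].
    destruct (conn_union Bx By HBx HBy (ex_intro _ a (conj Bxa Bya)) x y (or_introl Bxx) (or_intror Byy))
      as [C [FC [SC [Cx Cy]]]].
    exists C. repeat split; auto.
    intros u Cu. destruct (SC u Cu) as [Hu|Hu].
    + exists Bx. auto.
    + exists By. auto.
  - intros K' HK'S HK'c Hsub x Hx. exists K'. repeat split; auto.
    apply Hsub. exists K. auto.
  - intros x Kx. exists K. auto.
Qed.

Lemma comp_conn (S' D : V -> Prop) : component F S' D -> connected F D.
Proof. intros [_ [H _]]. exact H. Qed.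

Lemma comp_sub (S' D : V -> Prop) : component F S' D -> subset D S'.
Proof. intros [H _]. exact H. Qed.

Lemma comp_meet (S' D D' : V -> Prop) : component F S' D -> component F S' D' ->
  (exists x, D x /\ D' x) -> subset D' D.
Proof.
  intros HD HD' [x [Dx D'x]]. eapply comp_absorb; eauto.
  - eapply comp_conn; eauto.
  - eapply comp_sub; eauto.
Qed.

Lemma chain_conn (H : nat -> V -> Prop) :
  (forall n, connected F (H n)) -> (forall i, exists x, H i x /\ H (S i) x) ->
  forall d a x y, H a x -> H (a + d) y ->
  exists C, F C /\ subset C (fun z => exists n, a <= n /\ H n z) /\ C x /\ C y.
Proof.
  intros Hc Hi d. induction d as [|d IH]; intros a x y Hx Hy.
  - rewrite Nat.add_0_r in Hy. destruct (Hc a x y Hx Hy) as [C [FC [SC [Cx Cy]]]].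
    exists C. repeat split; auto. intros u Cu. exists a. split; auto.
  - destruct (Hi (a + d)) as [z [Hz1 Hz2]].
    destruct (IH a x z Hx Hz1) as [C1 [F1 [S1 [C1x C1z]]]].
    rewrite Nat.add_succ_r in Hy.
    destruct (Hc (S (a + d)) z y Hz2 Hy) as [C2 [F2 [S2 [C2z C2y]]]].
    exists (fun u => C1 u \/ C2 u). split; [|split; [|split]].
    + apply (cn_union F HF); eauto.
    + intros u [Hu|Hu]; auto. exists (S (a + d)). split; auto. lia.
    + auto.
    + auto.
Qed.

Lemma neck_nonempty (H : nat -> V -> Prop) :
  (forall i j, (exists x, H i x /\ H j x) <-> (i <= S j /\ j <= S i)) ->
  forall n, exists x, H n x.
Proof.
  intros HI n. destruct (proj2 (HI n n)) as [x [Hx _]]; [lia|]. eauto.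
Qed.

Lemma neck_infinite (N : V -> Prop) : necklace F N -> ~ finite_set N.
Proof.
  intros [_ [H [HH [HN HI]]]] Hfin.
  pose proof (neck_nonempty H HI) as Hne.
  set (f := fun k => proj1_sig (constructive_indefinite_description _ (Hne (2 * k)))).
  assert (Hf : forall k, H (2 * k) (f k)).
  { intros k. unfold f. destruct (constructive_indefinite_description _ _). auto. }
  apply (inj_infinite f).
  - intros i j E. destruct (proj1 (HI (2 * i) (2 * j))) as [H1 H2].
    + exists (f i). split; auto. rewrite E. auto.
    + lia.
  - apply fin_sub with (B := N); auto.
    intros x [n <-]. apply HN. eauto.
Qed.

Lemma neck_avoid (H : nat -> V -> Prop) :
  (forall i j, (exists x, H i x /\ H j x) <-> (i <= S j /\ j <= S i)) ->
  forall l : list V, exists n0, forall n, n0 <= n -> forall x, H n x -> ~ In x l.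
Proof.
  intros HI l. induction l as [|a l IH].
  - exists 0. intros n _ x _ [].
  - destruct IH as [n0 Hn0].
    destruct (classic (exists i, H i a)) as [[i Hi]|Hno].
    + exists (max n0 (S (S i))). intros n Hn x Hx [E|E].
      * subst. destruct (proj1 (HI i n)) as [_ Hle]; [eauto|]. lia.
      * apply (Hn0 n) with x; auto. lia.
    + exists n0. intros n Hn x Hx [E|E].
      * subst. eauto.
      * eapply Hn0; eauto.
Qed.

Lemma tail_exists (N X : V -> Prop) : necklace F N -> finite_set X -> exists K, Defs.tail F N X K.
Proof.
  intros HN0 HX. pose proof HN0 as [_ [H [HH [HN HI]]]].
  destruct HX as [l Hl].
  destruct (neck_avoid H HI l) as [n0 Hn0].
  set (T := fun x => exists n, n0 <= n /\ H n x).
  assert (HTc : connected F T).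
  { intros x y [a [Ha Hx]] [b [Hb Hy]].
    assert (Hgen : forall a b x y, n0 <= a -> a <= b -> H a x -> H b y ->
               exists C, F C /\ subset C T /\ C x /\ C y).
    { clear x y a b Ha Hb Hx Hy. intros a b x y Ha Hab Hx Hy.
      replace b with (a + (b - a)) in Hy by lia.
      destruct (chain_conn H (fun n => proj2 (HH n))
                 (fun i => proj2 (HI i (S i)) (conj (le_S _ _ (le_S _ _ (le_n _))) (le_n _)))
                 (b - a) a x y Hx Hy) as [C [FC [SC [Cx Cy]]]].
      - exists C. repeat split; auto. intros u Cu. destruct (SC u Cu) as [n [Hn Hu]].
        exists n. split; auto. lia. }
    destruct (le_ge_dec a b).
    - apply (Hgen a b x y); auto.
    - destruct (Hgen b a y x) as [C [? [? [? ?]]]]; auto; try lia. exists C; auto. }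
  destruct (neck_nonempty H HI n0) as [t0 Ht0].
  destruct (comp_exists (setminus N X) T t0 HTc) as [K [HK HTK]].
  - intros x [n [Hn Hx]]. split.
    + apply HN. eauto.
    + intros Xx. apply (Hn0 n Hn x Hx). auto.
  - exists n0. auto.
  - exists K. split; auto.
    apply fin_sub with (B := fun x => exists n, n < n0 /\ H n x).
    + apply fin_upto. intros n; apply HH.
    + intros x [Nx Kx]. destruct (proj1 (HN x) Nx) as [n Hn].
      exists n. split; auto. destruct (lt_dec n n0); auto.
      exfalso. apply Kx. apply HTK. exists n. split; auto. lia.
Qed.

Lemma tails_meet (N X Y K K' : V -> Prop) : necklace F N -> Defs.tail F N X K -> Defs.tail F N Y K' ->
  exists x, K x /\ K' x.
Proof.
  intros HN [_ HK] [_ HK']. apply NNPP. intros Hno.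
  apply (neck_infinite N HN).
  apply fin_sub with (B := fun x => setminus N K x \/ setminus N K' x).
  - apply fin_union; auto.
  - intros x Nx. destruct (classic (K x)).
    + right. split; auto. intros K'x. apply Hno. eauto.
    + left. split; auto.
Qed.

Lemma tail_conn (N X K : V -> Prop) : Defs.tail F N X K -> connected F K.
Proof. intros [HK _]. eapply comp_conn; eauto. Qed.

Lemma tail_sub (N X K : V -> Prop) : Defs.tail F N X K -> forall x, K x -> N x /\ ~ X x.
Proof. intros [HK _] x Kx. apply (comp_sub _ _ HK). auto. Qed.

Lemma equiv_refl (N : V -> Prop) : necklace F N -> necklace_equiv F N N.
Proof.
  intros HN X HX K K' HK HK'.
  destruct (tails_meet N X X K K' HN HK HK') as [x [Kx K'x]].
  destruct (comp_exists (fun y => ~ X y) K x (tail_conn _ _ _ HK)) as [D [HD HKD]]; auto.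
  - intros y Ky. apply (tail_sub _ _ _ HK). auto.
  - exists D. split; [|split]; auto.
    eapply comp_absorb; eauto.
    + eapply tail_conn; eauto.
    + intros y Ky. apply (tail_sub _ _ _ HK'). auto.
Qed.

Definition cls (N : V -> Prop) (HN : necklace F N) : cend F :=
  exist _ (fun N' => necklace F N' /\ necklace_equiv F N N')
    (ex_intro _ N (conj HN (fun N' => iff_refl _))).

Lemma cend_rep (nu : cend F) : exists N, necklace F N /\ proj1_sig nu N /\
  forall M, proj1_sig nu M -> necklace_equiv F N M.
Proof.
  destruct nu as [E [N [HN HE]]]. simpl. exists N. split; [|split]; auto.
  - apply HE. split; auto. apply equiv_refl; auto.
  - intros M HM. apply HE. auto.
Qed.

Lemma KX_exists (nu : cend F) (X : V -> Prop) : finite_set X -> exists D, KX F X nu D.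
Proof.
  intros HX. destruct (cend_rep nu) as [N [HN [HNnu Heq]]].
  destruct (tail_exists N X HN HX) as [K HK].
  destruct (tails_meet N X X K K HN HK HK) as [x [Kx _]].
  destruct (comp_exists (fun y => ~ X y) K x (tail_conn _ _ _ HK)) as [D [HD HKD]]; auto.
  { intros y Ky. apply (tail_sub _ _ _ HK). auto. }
  exists D. split; auto.
  intros M HM K' HK'.
  destruct (Heq M HM X HX K K' HK HK') as [D' [HD' [HKD' HK'D']]].
  intros y K'y. apply (comp_meet _ D D' HD HD'); auto.
  exists x. auto.
Qed.

Lemma KX_comp (X : V -> Prop) nu D : KX F X nu D -> component F (fun x => ~ X x) D.
Proof. intros [H _]. exact H. Qed.

Lemma KX_meet (nu : cend F) X Y D D' : finite_set X -> finite_set Y ->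
  KX F X nu D -> KX F Y nu D' -> exists x, D x /\ D' x.
Proof.
  intros HX HY [_ HD] [_ HD'].
  destruct (cend_rep nu) as [N [HN [HNnu _]]].
  destruct (tail_exists N X HN HX) as [K HK].
  destruct (tail_exists N Y HN HY) as [K' HK'].
  destruct (tails_meet N X Y K K' HN HK HK') as [x [Kx K'x]].
  exists x. split; [apply (HD N HNnu K HK)|apply (HD' N HNnu K' HK')]; auto.
Qed.

Lemma KX_mono (nu : cend F) Y Z D D' : finite_set Y -> finite_set Z ->
  (forall x, Y x -> Z x) -> KX F Z nu D -> KX F Y nu D' -> subset D D'.
Proof.
  intros HY HZ HYZ HD HD'.
  eapply comp_absorb.
  - apply (KX_comp _ _ _ HD').
  - apply (comp_conn _ _ (KX_comp _ _ _ HD)).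
  - intros x Dx Yx. apply (comp_sub _ _ (KX_comp _ _ _ HD) x Dx). auto.
  - destruct (KX_meet nu Z Y D D' HZ HY HD HD') as [x Hx]. eauto.
Qed.

Lemma cend_ext (nu mu : cend F) :
  (forall X, finite_set X -> exists D D', KX F X nu D /\ KX F X mu D' /\ exists x, D x /\ D' x) ->
  nu = mu.
Proof.
  intros Hyp.
  destruct nu as [E [N [HN HE]]] eqn:Enu. destruct mu as [E' [N' [HN' HE']]] eqn:Emu.
  assert (HNE : E N) by (apply HE; split; auto; apply equiv_refl; auto).
  assert (HNE' : E' N') by (apply HE'; split; auto; apply equiv_refl; auto).
  assert (EE : E = E').
  { apply functional_extensionality. intros M. apply propositional_extensionality. split.
    - intros HM. destruct (proj1 (HE M) HM) as [HMn _]. apply HE'. split; auto.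
      intros X HX K K' HK HK'.
      destruct (Hyp X HX) as [D [D' [HD [HD' [x [Dx D'x]]]]]].
      exists D. split; [apply (KX_comp _ _ _ HD)|split].
      + intros y Ky. apply (comp_meet _ D D' (KX_comp _ _ _ HD) (KX_comp _ _ _ HD')); eauto.
        apply (proj2 HD' N' HNE' K HK). auto.
      + apply (proj2 HD M HM K' HK').
    - intros HM. destruct (proj1 (HE' M) HM) as [HMn _]. apply HE. split; auto.
      intros X HX K K' HK HK'.
      destruct (Hyp X HX) as [D [D' [HD [HD' [x [Dx D'x]]]]]].
      exists D'. split; [apply (KX_comp _ _ _ HD')|split].
      + intros y Ky. apply (comp_meet _ D' D (KX_comp _ _ _ HD') (KX_comp _ _ _ HD)); eauto.
        apply (proj2 HD N HNE K HK). auto.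
      + apply (proj2 HD' M HM K' HK'). }
  subst E'. f_equal. apply proof_irrelevance.
Qed.

Lemma conv_unique (Y : V -> Prop) (nu mu : cend F) :
  converges F Y nu -> converges F Y mu -> nu = mu.
Proof.
  intros [Hinf Hnu] [_ Hmu]. apply cend_ext. intros X HX.
  destruct (Hnu X HX) as [D [HD HfD]]. destruct (Hmu X HX) as [D' [HD' HfD']].
  exists D, D'. split; [|split]; auto.
  apply NNPP. intros Hno. apply Hinf.
  apply fin_sub with (B := fun x => setminus Y D x \/ setminus Y D' x).
  - apply fin_union; auto.
  - intros y Yy. destruct (classic (D y)).
    + right. split; auto. intros D'y. apply Hno. eauto.
    + left. split; auto.
Qed.

Lemma KX_cls (N : V -> Prop) (HN : necklace F N) X : finite_set X ->
  exists D K, KX F X (cls N HN) D /\ Defs.tail F N X K /\ subset K D.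
Proof.
  intros HX. destruct (KX_exists (cls N HN) X HX) as [D HD].
  destruct (tail_exists N X HN HX) as [K HK].
  exists D, K. split; [|split]; auto.
  apply (proj2 HD N); auto. simpl. split; auto. apply equiv_refl; auto.
Qed.

Lemma conv_cls (N : V -> Prop) (HN : necklace F N) (Y : V -> Prop) :
  ~ finite_set Y -> finite_set (setminus Y N) -> converges F Y (cls N HN).
Proof.
  intros Hinf HfYN. split; auto. intros X HX.
  destruct (KX_cls N HN X HX) as [D [K [HD [HK HKD]]]].
  exists D. split; auto.
  apply fin_sub with (B := fun x => setminus Y N x \/ setminus N K x).
  - apply fin_union; auto. destruct HK; auto.
  - intros y [Yy Dy]. destruct (classic (N y)).
    + right. split; auto.
    + left. split; auto.
Qed.

End Conn.

Section Chains.
Variable V : Type.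
Variable adj : V -> V -> Prop.

Lemma chain_app_cons (l1 : list V) y l2 :
  chain adj (l1 ++ y :: l2) <-> chain adj (l1 ++ [y]) /\ chain adj (y :: l2).
Proof.
  induction l1 as [|a l1 IH].
  - simpl. tauto.
  - destruct l1 as [|b l1].
    + simpl. tauto.
    + change (adj a b /\ chain adj ((b :: l1) ++ y :: l2) <->
              (adj a b /\ chain adj ((b :: l1) ++ [y])) /\ chain adj (y :: l2)).
      rewrite IH. tauto.
Qed.

Lemma chain_app_l (l1 l2 : list V) : chain adj (l1 ++ l2) -> chain adj l1.
Proof.
  destruct l2 as [|y l2]; [rewrite app_nil_r; auto|].
  intros H. apply chain_app_cons in H. destruct H as [H _].
  destruct l1 as [|a l1]; [simpl; auto|].
  revert a H. induction l1 as [|b l1 IH]; intros a H; [simpl; auto|].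
  destruct H as [H1 H2]. split; auto.
Qed.

Lemma chain_app_r (l1 l2 : list V) : chain adj (l1 ++ l2) -> chain adj l2.
Proof.
  destruct l2 as [|y l2]; [simpl; auto|].
  intros H. apply chain_app_cons in H. tauto.
Qed.

Lemma chain_snoc (l : list V) y d : chain adj l -> l <> [] -> adj (last l d) y ->
  chain adj (l ++ [y]).
Proof.
  induction l as [|a l IH]; intros H Hne Hadj; [congruence|].
  destruct l as [|b l].
  - simpl in *. auto.
  - destruct H as [H1 H2]. change (adj a b /\ chain adj ((b :: l) ++ [y])). split; auto.
    apply IH; auto. discriminate.
Qed.

Lemma chain_cons_intro (x : V) l : chain adj l -> (forall h, hd_error l = Some h -> adj x h) ->
  chain adj (x :: l).
Proof.
  destruct l as [|h l]; simpl; auto.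
Qed.

Lemma chain_rev : (forall x y, adj x y -> adj y x) -> forall l, chain adj l -> chain adj (rev l).
Proof.
  intros Hsym l. induction l as [|a l IH]; intros H; [simpl; auto|].
  simpl. destruct l as [|b l]; [simpl; auto|].
  destruct H as [H1 H2]. apply chain_snoc with (d := a); auto.
  - simpl. intros E. apply app_eq_nil in E. destruct E; discriminate.
  - change (rev (b :: l)) with (rev l ++ [b]). rewrite last_last. auto.
Qed.

Lemma chain_nth (l : list V) d : chain adj l -> forall i, S i < length l ->
  adj (nth i l d) (nth (S i) l d).
Proof.
  induction l as [|a l IH]; intros H i Hi; simpl in Hi; [lia|].
  destruct l as [|b l]; simpl in Hi; [lia|].
  destruct H as [H1 H2]. destruct i as [|i].
  - simpl. auto.
  - change (adj (nth i (b :: l) d) (nth (S i) (b :: l) d)). apply IH; auto. simpl. lia.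
Qed.

Lemma first_common (p q : list V) : (exists w, In w p /\ In w q) ->
  exists a z b, p = a ++ z :: b /\ In z q /\ forall w, In w a -> ~ In w q.
Proof.
  induction p as [|h p IH]; intros [w [Hwp Hwq]]; [destruct Hwp|].
  destruct (classic (In h q)) as [Hh|Hh].
  - exists [], h, p. split; auto.
  - destruct Hwp as [E|Hwp]; [subst; contradiction|].
    destruct IH as [a [z [b [E [Hz Ha]]]]]; eauto.
    exists (h :: a), z, b. split; [subst; auto|split; auto].
    intros u [Eu|Hu]; [subst; auto|auto].
Qed.

End Chains.

Lemma tpath_hd {V} adj (x y : V) p : tpath adj x y p -> exists l, p = x :: l.
Proof. intros [H _]. destruct p; simpl in H; inversion H; subst; eauto. Qed.

Lemma tpath_tail {V} adj (x x1 y : V) l : tpath adj x y (x :: x1 :: l) -> tpath adj x1 y (x1 :: l) /\ adj x x1.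
Proof.
  intros [H1 [H2 [H3 H4]]]. destruct H4 as [H4 H5]. split; auto.
  split; [reflexivity|split; [|split]].
  - rewrite <- H2. simpl. apply last_cons_indep.
  - inversion H3; auto.
  - auto.
Qed.

Section Tree.
Variable V : Type.
Variable VT : V -> Prop.
Variable adj : V -> V -> Prop.
Variable root : V.
Hypothesis Ht : rooted_tree VT adj root.

Lemma no_branch (x x1 x1' y : V) (p1 q1 : list V) :
  adj x x1 -> adj x x1' -> x1 <> x1' ->
  hd_error p1 = Some x1 -> hd_error q1 = Some x1' -> NoDup p1 -> NoDup q1 ->
  chain adj p1 -> chain adj q1 -> In y p1 -> In y q1 -> ~ In x p1 -> ~ In x q1 -> False.
Proof.
  intros Ha1 Ha2 Hne Hh1 Hh2 Hn1 Hn2 Hc1 Hc2 Hy1 Hy2 Hx1 Hx2.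
  destruct (first_common V p1 q1) as [a [z [b [Ep [Hzq Ha]]]]]; eauto.
  destruct (in_split z q1 Hzq) as [c [d Eq]].
  apply (rt_acyc VT adj root Ht (x :: a ++ z :: rev c)).
  assert (Hc1' : chain adj (a ++ [z])) by (rewrite Ep in Hc1; apply chain_app_cons in Hc1; tauto).
  assert (Hc2' : chain adj (c ++ [z])) by (rewrite Eq in Hc2; apply chain_app_cons in Hc2; tauto).
  assert (Hhd : hd_error (c ++ [z]) = Some x1').
  { rewrite <- Hh2, Eq. destruct c; reflexivity. }
  destruct (c ++ [z]) as [|h m] eqn:Ecz; [discriminate|]. simpl in Hhd. inversion Hhd; subst h.
  assert (Erev : z :: rev c = rev m ++ [x1']).
  { symmetry. change (rev (x1' :: m) = z :: rev c). rewrite <- Ecz. rewrite rev_app_distr. reflexivity. }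
  split; [|split; [|split]].
  - simpl. rewrite length_app. simpl.
    destruct a as [|a0 a]; destruct c as [|c0 c]; simpl; rewrite ?length_app, ?length_rev; simpl; try lia.
    exfalso. apply Hne. rewrite Ep in Hh1. rewrite Eq in Hh2. simpl in *. congruence.
  - constructor.
    + intros Hx. apply in_app_or in Hx. destruct Hx as [Hx|[Hx|Hx]].
      * apply Hx1. rewrite Ep. apply in_or_app. auto.
      * subst. auto.
      * apply Hx2. rewrite Eq. apply in_or_app. left. apply in_rev. auto.
    + apply NoDup_app.
      * rewrite Ep in Hn1. eapply NoDup_app_remove_r; eauto.
      * constructor.
        -- intros Hz. apply in_rev in Hz. rewrite Eq in Hn2. apply NoDup_remove_2 in Hn2.
           apply Hn2. apply in_or_app. auto.
        -- apply NoDup_rev. rewrite Eq in Hn2. eapply NoDup_app_remove_r; eauto.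
      * intros w Hwa [Hw|Hw].
        -- apply (Ha w Hwa). rewrite <- Hw. auto.
        -- apply (Ha w Hwa). rewrite Eq. apply in_or_app. left. apply in_rev. auto.
  - change (chain adj ((x :: a) ++ z :: rev c)). apply chain_app_cons. split.
    + simpl. apply chain_cons_intro; auto.
      intros h Hh. rewrite Ep in Hh1. destruct a; simpl in *; congruence.
    + rewrite Erev. change (chain adj (rev (x1' :: m))). apply chain_rev.
      * apply (rt_sym VT adj root Ht).
      * exact Hc2'.
  - exists x. split; [reflexivity|].
    replace (x :: a ++ z :: rev c) with (((x :: a) ++ rev m) ++ [x1']).
    + rewrite last_last. apply (rt_sym VT adj root Ht). auto.
    + rewrite Erev. simpl. rewrite <- app_assoc. reflexivity.
Qed.

Lemma path_unique (p : list V) : forall x y q, tpath adj x y p -> tpath adj x y q -> p = q.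
Proof.
  induction p as [|h p1 IH]; intros x y q Hp Hq.
  - destruct Hp as [H _]. discriminate.
  - destruct (tpath_hd _ _ _ _ Hp) as [l El]. inversion El; subst h l. clear El.
    destruct (tpath_hd _ _ _ _ Hq) as [q1 Eq]. subst q.
    destruct p1 as [|x1 p2].
    + destruct Hp as [_ [Hy _]]. simpl in Hy. subst y.
      destruct q1 as [|x1' q2]; auto. exfalso.
      destruct Hq as [_ [Hl [Hn _]]].
      inversion Hn as [|? ? Hnx _]; subst.
      apply Hnx. rewrite <- Hl at 1. change (In (last (x1' :: q2) x) (x1' :: q2)).
      apply last_in. discriminate.
    + destruct q1 as [|x1' q2].
      * exfalso. destruct Hq as [_ [Hl _]]. simpl in Hl. subst y.
        destruct Hp as [_ [Hl [Hn _]]]. inversion Hn as [|? ? Hnx _]; subst.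
        apply Hnx. rewrite <- Hl at 1. change (In (last (x1 :: p2) x) (x1 :: p2)).
        apply last_in. discriminate.
      * destruct (tpath_tail _ _ _ _ _ Hp) as [Hp' Ha1].
        destruct (tpath_tail _ _ _ _ _ Hq) as [Hq' Ha2].
        destruct (classic (x1 = x1')) as [E|Hne].
        -- subst x1'. f_equal. eapply IH; eauto.
        -- exfalso. destruct Hp as [_ [Hl1 [Hn1 Hc1]]]. destruct Hq as [_ [Hl2 [Hn2 Hc2]]].
           destruct Hp' as [_ [Hl1' [Hn1' Hc1']]]. destruct Hq' as [_ [Hl2' [Hn2' Hc2']]].
           apply (no_branch x x1 x1' y (x1 :: p2) (x1' :: q2)); auto.
           ++ rewrite <- Hl1'. apply last_in. discriminate.
           ++ rewrite <- Hl2'. apply last_in. discriminate.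
           ++ inversion Hn1; auto.
           ++ inversion Hn2; auto.
Qed.

End Tree.

Section RP.
Variable V : Type.
Variable VT : V -> Prop.
Variable adj : V -> V -> Prop.
Variable root : V.
Hypothesis Ht : rooted_tree VT adj root.

Lemma rp_ex (v : V) : exists p, VT v -> tpath adj root v p.
Proof.
  destruct (classic (VT v)) as [H|H].
  - destruct (rt_conn VT adj root Ht v H) as [p Hp]. eauto.
  - exists []. tauto.
Qed.

Definition rp (v : V) : list V := proj1_sig (constructive_indefinite_description _ (rp_ex v)).

Lemma rp_spec v : VT v -> tpath adj root v (rp v).
Proof. unfold rp. destruct (constructive_indefinite_description _ _). simpl. auto. Qed.

Lemma rp_uniq v p : VT v -> tpath adj root v p -> p = rp v.
Proof. intros Hv Hp. eapply path_unique; eauto. apply rp_spec; auto. Qed.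

Lemma chain_VT (a : V) l : chain adj (a :: l) -> forall w, In w l -> VT w.
Proof.
  revert a. induction l as [|b l IH]; intros a H w Hw; [destruct Hw|].
  destruct H as [H1 H2]. destruct Hw as [E|Hw].
  - subst. apply (rt_dom VT adj root Ht a w H1).
  - eapply IH; eauto.
Qed.

Lemma path_VT y p : tpath adj root y p -> forall w, In w p -> VT w.
Proof.
  intros Hp. destruct (tpath_hd _ _ _ _ Hp) as [l El]. subst p.
  intros w [E|Hw].
  - rewrite <- E. apply (rt_root VT adj root Ht).
  - destruct Hp as [_ [_ [_ Hc]]]. eapply chain_VT; eauto.
Qed.

Lemma rp_last v : VT v -> last (rp v) root = v.
Proof. intros Hv. apply (rp_spec v Hv). Qed.

Lemma rp_ne v : VT v -> rp v <> [].
Proof. intros Hv E. pose proof (rp_spec v Hv) as [H _]. rewrite E in H. discriminate. Qed.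

Lemma rp_self v : VT v -> In v (rp v).
Proof. intros Hv. rewrite <- (rp_last v Hv) at 1. apply last_in. apply rp_ne; auto. Qed.

Lemma rp_hd v : VT v -> exists l, rp v = root :: l.
Proof. intros Hv. eapply tpath_hd. apply rp_spec; auto. Qed.

Lemma rp_root_in v : VT v -> In root (rp v).
Proof. intros Hv. destruct (rp_hd v Hv) as [l E]. rewrite E. left; auto. Qed.

Lemma rp_nth0 v : VT v -> nth 0 (rp v) root = root.
Proof. intros Hv. destruct (rp_hd v Hv) as [l E]. rewrite E. reflexivity. Qed.

Lemma rp_inj x y : VT x -> VT y -> rp x = rp y -> x = y.
Proof. intros Hx Hy E. rewrite <- (rp_last x Hx), <- (rp_last y Hy), E. auto. Qed.

Lemma tle_iff x y : VT y -> (tle adj root x y <-> In x (rp y)).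
Proof.
  intros Hy. split.
  - intros [p [Hp Hx]]. rewrite <- (rp_uniq y p Hy Hp). auto.
  - intros H. exists (rp y). split; auto. apply rp_spec; auto.
Qed.

Lemma path_prefix x y l1 l2 : tpath adj x y (l1 ++ l2) -> l1 <> [] -> tpath adj x (last l1 x) l1.
Proof.
  intros [H1 [H2 [H3 H4]]] Hne. split; [|split; [reflexivity|split]].
  - destruct l1; [congruence|]. auto.
  - eapply NoDup_app_remove_r; eauto.
  - eapply chain_app_l; eauto.
Qed.

Lemma rp_VT y w : VT y -> In w (rp y) -> VT w.
Proof. intros Hy Hw. eapply path_VT; eauto. apply rp_spec; auto. Qed.

Lemma rp_prefix y w : VT y -> In w (rp y) -> exists q, rp y = rp w ++ q.
Proof.
  intros Hy Hw. destruct (in_split w (rp y) Hw) as [l1 [l2 E]].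
  exists l2. assert (Hw' : VT w) by (eapply rp_VT; eauto).
  replace (rp w) with (l1 ++ [w]). { rewrite <- app_assoc. auto. }
  apply rp_uniq; auto.
  pose proof (rp_spec y Hy) as Hp. rewrite E in Hp.
  replace (l1 ++ w :: l2) with ((l1 ++ [w]) ++ l2) in Hp by (rewrite <- app_assoc; auto).
  apply path_prefix in Hp.
  - rewrite last_last in Hp. auto.
  - intros E'. apply app_eq_nil in E'. destruct E'; discriminate.
Qed.

Lemma rp_snoc x y : VT x -> adj x y -> ~ In y (rp x) -> rp y = rp x ++ [y].
Proof.
  intros Hx Hxy Hy. symmetry. apply rp_uniq.
  - apply (rt_dom VT adj root Ht x y Hxy).
  - pose proof (rp_spec x Hx) as [H1 [H2 [H3 H4]]]. split; [|split; [|split]].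
    + destruct (rp x); [discriminate|]. auto.
    + apply last_last.
    + apply NoDup_app; auto. * constructor; auto. constructor.
      * intros a Ha [E|[]]. subst. auto.
    + apply chain_snoc with (d := root); auto. apply rp_ne; auto. rewrite H2. auto.
Qed.

Lemma rp_adj x y : adj x y -> rp y = rp x ++ [y] \/ rp x = rp y ++ [x].
Proof.
  intros Hxy. destruct (rt_dom VT adj root Ht x y Hxy) as [Hx Hy].
  destruct (classic (In y (rp x))) as [Hin|Hin].
  - right. apply rp_snoc; auto.
    + apply (rt_sym VT adj root Ht); auto.
    + intros Hx'. destruct (rp_prefix x y Hx Hin) as [q E].
      destruct q as [|a q].
      * rewrite app_nil_r in E. apply (rt_irrefl VT adj root Ht x).
        rewrite (rp_inj x y Hx Hy E) at 2. auto.
      * apply (NoDup_app_disj (rp y) (a :: q) x).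
        -- rewrite <- E. apply (rp_spec x Hx).
        -- auto.
        -- rewrite <- (rp_last x Hx) at 1. rewrite E. rewrite last_app_ne by discriminate.
           apply last_in. discriminate.
  - left. apply rp_snoc; auto.
Qed.

Lemma tle_refl v : VT v -> tle adj root v v.
Proof. intros Hv. apply tle_iff; auto. apply rp_self; auto. Qed.

Lemma tle_VT x y : tle adj root x y -> VT x /\ VT y.
Proof.
  intros [p [Hp Hx]]. split.
  - eapply path_VT; eauto.
  - eapply path_VT; eauto. rewrite <- (proj1 (proj2 Hp)). apply last_in.
    destruct Hp as [H _]. destruct p; [discriminate|]. discriminate.
Qed.

Lemma tle_prefix x y : tle adj root x y -> exists q, rp y = rp x ++ q.
Proof.
  intros H. destruct (tle_VT x y H) as [Hx Hy]. apply tle_iff in H; auto.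
  apply rp_prefix; auto.
Qed.

Lemma prefix_tle x y q : VT x -> VT y -> rp y = rp x ++ q -> tle adj root x y.
Proof.
  intros Hx Hy E. apply tle_iff; auto. rewrite E. apply in_or_app. left. apply rp_self; auto.
Qed.

Definition RR (C : nat -> V) := ray adj C /\ C 0 = root.

Lemma RR_VT C : RR C -> forall k, VT (C k).
Proof. intros [[_ H] _] k. apply (rt_dom VT adj root Ht _ _ (H k)). Qed.

Lemma last_map_seq (C : nat -> V) k d : last (map C (seq 0 (S k))) d = C k.
Proof. rewrite seq_S, map_app. simpl. apply last_last. Qed.

Lemma RR_rp C : RR C -> forall k, rp (C k) = map C (seq 0 (S k)).
Proof.
  intros HC k. symmetry. apply rp_uniq; [apply RR_VT; auto|].
  destruct HC as [[Hinj Hadj] H0]. split; [|split; [|split]].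
  - simpl. rewrite H0. auto.
  - apply last_map_seq.
  - apply NoDup_map_NoDup_ForallPairs.
    + intros a b _ _ E. apply Hinj; auto.
    + apply seq_NoDup.
  - induction k as [|k IH]; [simpl; auto|].
    rewrite seq_S, map_app. simpl (map C [S k]).
    apply chain_snoc with (d := root); auto.
    + simpl. discriminate.
    + rewrite last_map_seq. auto.
Qed.

Lemma RR_len C : RR C -> forall k, length (rp (C k)) = S k.
Proof. intros HC k. rewrite (RR_rp C HC k), length_map, length_seq. auto. Qed.

Lemma RR_tle C : RR C -> forall x k, tle adj root x (C k) <-> exists i, i <= k /\ x = C i.
Proof.
  intros HC x k. rewrite tle_iff by (apply RR_VT; auto). rewrite (RR_rp C HC k).
  rewrite in_map_iff. split.
  - intros [i [E Hi]]. apply in_seq in Hi. exists i. split; [lia|auto].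
  - intros [i [Hi E]]. exists i. split; auto. apply in_seq. lia.
Qed.

Lemma RR_meet C C' : RR C -> RR C' -> forall a b, C a = C' b -> a = b /\ forall i, i <= a -> C i = C' i.
Proof.
  intros HC HC' a b E.
  assert (Eab : a = b).
  { pose proof (RR_len C HC a) as H1. pose proof (RR_len C' HC' b) as H2. rewrite E in H1. lia. }
  subst b. split; auto. intros i Hi.
  assert (Hm : map C (seq 0 (S a)) = map C' (seq 0 (S a))).
  { rewrite <- (RR_rp C HC a), <- (RR_rp C' HC' a). rewrite E. auto. }
  assert (H1 := f_equal (fun l => nth i l (C 0)) Hm). cbv beta in H1.
  rewrite map_nth, seq_nth in H1 by lia.
  rewrite (nth_indep _ (C 0) (C' 0)) in H1 by (rewrite length_map, length_seq; lia).
  rewrite map_nth, seq_nth in H1 by lia. simpl in H1. auto.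
Qed.

End RP.

Lemma min_nat (P : nat -> Prop) : (exists n, P n) -> exists n, P n /\ forall m, m < n -> ~ P m.
Proof.
  intros [n Hn]. revert Hn. induction n as [n IH] using lt_wf_ind. intros Hn.
  destruct (classic (exists m, m < n /\ P m)) as [[m [Hm Pm]]|Hno].
  - apply (IH m Hm Pm).
  - exists n. split; auto. intros m Hm Pm. apply Hno. eauto.
Qed.

Section Rays.
Variable V : Type.
Variable VT : V -> Prop.
Variable adj : V -> V -> Prop.
Variable root : V.
Hypothesis Ht : rooted_tree VT adj root.

Notation rp := (rp V VT adj root Ht).
Notation RR := (RR V adj root).

Lemma sub_inv t c : VT t -> rp c = rp t ++ [c] -> forall x y, adj x y ->
  ~ tle adj root x t -> ~ tle adj root y t -> (In c (rp x) <-> In c (rp y)).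
Proof.
  intros Hvt Ec x y Hxy Hx Hy.
  assert (Hgen : forall x y, adj x y -> ~ tle adj root x t -> rp y = rp x ++ [y] ->
                 (In c (rp x) <-> In c (rp y))).
  { clear x y Hxy Hx Hy. intros x y Hxy Hx E. rewrite E. split.
    - intros H. apply in_or_app. auto.
    - intros H. apply in_app_or in H. destruct H as [H|[H|[]]]; auto.
      subst y. exfalso. apply Hx. rewrite Ec in E. apply app_inj_tail in E. destruct E as [E _].
      assert (Hvx : VT x) by (apply (rt_dom VT adj root Ht x c Hxy)).
      assert (x = t) by (apply (rp_inj V VT adj root Ht); auto). subst.
      apply (tle_refl V VT adj root Ht); auto. }
  destruct (rp_adj V VT adj root Ht x y Hxy) as [E|E].
  - apply Hgen; auto.
  - symmetry. apply Hgen; auto. apply (rt_sym VT adj root Ht); auto.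
Qed.

Lemma path_inv (U X : V -> Prop) : (forall x y, adj x y -> ~ X x -> ~ X y -> (U x <-> U y)) ->
  forall p a b, tpath adj a b p -> (forall z, In z p -> ~ X z) -> (U a <-> U b).
Proof.
  intros HU p. induction p as [|h p IH]; intros a b Hp Hz.
  - destruct Hp as [H _]; discriminate.
  - destruct (tpath_hd _ _ _ _ Hp) as [l El]. inversion El; subst h l. clear El.
    destruct p as [|a1 p].
    + destruct Hp as [_ [Hl _]]. simpl in Hl. subst. tauto.
    + destruct (tpath_tail _ _ _ _ _ Hp) as [Hp' Ha].
      rewrite (HU a a1 Ha); [|apply Hz; left; auto|apply Hz; right; left; auto].
      apply IH; auto. intros z Hz'. apply Hz. right. auto.
Qed.

Lemma ray_inv (U X : V -> Prop) A : (forall x y, adj x y -> ~ X x -> ~ X y -> (U x <-> U y)) ->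
  ray adj A -> forall n, (forall k, n <= k -> ~ X (A k)) -> forall i, U (A n) <-> U (A (n + i)).
Proof.
  intros HU [_ Hadj] n Hn i. induction i as [|i IH].
  - rewrite Nat.add_0_r. tauto.
  - rewrite IH. rewrite Nat.add_succ_r. apply HU; auto; apply Hn; lia.
Qed.

Definition Rooted (A C : nat -> V) := RR C /\ exists a0 c0, forall i, A (a0 + i) = C (c0 + i).

Lemma rooted_equiv A B C : Rooted A C -> Rooted B C -> ray_equiv adj A B.
Proof.
  intros [HC [a0 [c0 EA]]] [_ [b0 [d0 EB]]] X HX.
  destruct (inj_avoid C X HX (proj1 (proj1 HC))) as [i0 Hi0].
  exists (a0 + (i0 + c0 + d0 - c0)), (b0 + (i0 + c0 + d0 - d0)), [C (i0 + c0 + d0)].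
  assert (HAn : A (a0 + (i0 + c0 + d0 - c0)) = C (i0 + c0 + d0)) by (rewrite EA; f_equal; lia).
  assert (HBm : B (b0 + (i0 + c0 + d0 - d0)) = C (i0 + c0 + d0)) by (rewrite EB; f_equal; lia).
  split; [|split; [|split]].
  - intros k Hk. replace k with (a0 + (k - a0)) by lia. rewrite EA. apply Hi0. lia.
  - intros k Hk. replace k with (b0 + (k - b0)) by lia. rewrite EB. apply Hi0. lia.
  - rewrite HAn, HBm. split; [reflexivity|split; [reflexivity|split]].
    + constructor; [intros []|constructor].
    + simpl; auto.
  - intros z [E|[]]. subst. apply Hi0. lia.
Qed.

Lemma rooted_uniq A B C C' : ray adj A -> ray adj B -> ray_equiv adj A B ->
  Rooted A C -> Rooted B C' -> C = C'.
Proof.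
  intros HA HB HAB [HC [a0 [c0 EA]]] [HC' [b0 [d0 EB]]].
  apply functional_extensionality. intros j0. apply NNPP. intros Hne0.
  destruct (min_nat (fun j => C j <> C' j)) as [j [Hj Hmin]]; [eauto|].
  destruct j as [|j'].
  { apply Hj. rewrite (proj2 HC), (proj2 HC'). auto. }
  assert (Et : C j' = C' j') by (apply NNPP; intros H; apply (Hmin j'); auto).
  assert (Hvt : VT (C j')) by (apply (RR_VT V VT adj root Ht C HC)).
  assert (Ec : rp (C (S j')) = rp (C j') ++ [C (S j')]).
  { rewrite !(RR_rp V VT adj root Ht C HC). rewrite (seq_S (S j')), map_app. reflexivity. }
  set (X := fun x => tle adj root x (C j')).
  assert (HX : finite_set X).
  { apply fin_sub with (B := fun x => In x (rp (C j'))). apply fin_list.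
    intros x Hx. apply (tle_iff V VT adj root Ht); auto. }
  set (U := fun v => In (C (S j')) (rp v)).
  assert (HU : forall x y, adj x y -> ~ X x -> ~ X y -> (U x <-> U y))
    by (intros; apply (sub_inv (C j') (C (S j'))); auto).
  destruct (HAB X HX) as [n [m [p [HnA [HmB [Hp Hpz]]]]]].
  assert (U1 : U (A (n + (a0 + S j')))).
  { replace (n + (a0 + S j')) with (a0 + (n + S j')) by lia. rewrite EA. unfold U.
    apply (tle_iff V VT adj root Ht); [apply (RR_VT V VT adj root Ht C HC)|].
    apply (RR_tle V VT adj root Ht C HC). exists (S j'). split; [lia|reflexivity]. }
  apply (ray_inv U X A HU HA n HnA) in U1.
  apply (path_inv U X HU p (A n) (B m) Hp Hpz) in U1.
  apply (ray_inv U X B HU HB m HmB (b0 + S j')) in U1.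
  replace (m + (b0 + S j')) with (b0 + (m + S j')) in U1 by lia. rewrite EB in U1.
  unfold U in U1. apply (tle_iff V VT adj root Ht) in U1; [|apply (RR_VT V VT adj root Ht C' HC')].
  apply (RR_tle V VT adj root Ht C' HC') in U1. destruct U1 as [i [Hi E]].
  destruct (RR_meet V VT adj root Ht C C' HC HC' _ _ E) as [Ei Hall].
  apply Hj. apply Hall. lia.
Qed.

Lemma rooted_exists A : ray adj A -> exists C, Rooted A C.
Proof.
  intros [Hinj Hadj].
  assert (HV : forall n, VT (A n)) by (intros n; apply (rt_dom VT adj root Ht _ _ (Hadj n))).
  assert (Hud : forall n, rp (A (S n)) = rp (A n) ++ [A (S n)] \/ rp (A n) = rp (A (S n)) ++ [A n])
    by (intros n; apply (rp_adj V VT adj root Ht); auto).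
  assert (Hupup : forall n, rp (A (S n)) = rp (A n) ++ [A (S n)] ->
                            rp (A (S (S n))) = rp (A (S n)) ++ [A (S (S n))]).
  { intros n Hn. destruct (Hud (S n)) as [H|H]; auto. exfalso.
    rewrite H in Hn. apply app_inj_tail in Hn. destruct Hn as [E _].
    apply (rp_inj V VT adj root Ht) in E; auto. apply Hinj in E. lia. }
  assert (Hex : exists a0, rp (A (S a0)) = rp (A a0) ++ [A (S a0)]).
  { apply NNPP. intros Hno.
    assert (Hd : forall n, length (rp (A n)) = length (rp (A (S n))) + 1).
    { intros n. destruct (Hud n) as [H|H]; [exfalso; eauto|]. rewrite H, length_app. simpl. lia. }
    assert (Hl : forall n, length (rp (A n)) + n = length (rp (A 0))).
    { induction n as [|n IHn]; [lia|]. rewrite <- IHn, (Hd n). lia. }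
    specialize (Hl (length (rp (A 0)))).
    assert (length (rp (A (length (rp (A 0))))) >= 1).
    { destruct (rp (A (length (rp (A 0))))) eqn:E; [|simpl; lia].
      exfalso. eapply (rp_ne V VT adj root Ht); eauto. }
    lia. }
  destruct Hex as [a0 Ha0].
  assert (Hup : forall i, rp (A (S (a0 + i))) = rp (A (a0 + i)) ++ [A (S (a0 + i))]).
  { induction i as [|i IH]; [rewrite Nat.add_0_r; auto|]. rewrite Nat.add_succ_r. apply Hupup; auto. }
  assert (Hpre : forall i d, exists q, rp (A (a0 + (i + d))) = rp (A (a0 + i)) ++ q).
  { intros i d. induction d as [|d [q IH]].
    - exists []. rewrite Nat.add_0_r, app_nil_r. auto.
    - exists (q ++ [A (a0 + (i + S d))]). rewrite app_assoc, <- IH.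
      replace (a0 + (i + S d)) with (S (a0 + (i + d))) by lia. apply Hup. }
  assert (HL0 : 1 <= length (rp (A a0))).
  { destruct (rp (A a0)) eqn:E; [|simpl; lia]. exfalso. eapply (rp_ne V VT adj root Ht); eauto. }
  assert (Hlen : forall i, length (rp (A (a0 + i))) = length (rp (A a0)) + i).
  { induction i as [|i IH]; [rewrite Nat.add_0_r; lia|]. rewrite Nat.add_succ_r, Hup, length_app, IH.
    simpl. lia. }
  assert (HC : forall i d, nth i (rp (A (a0 + i))) root = nth i (rp (A (a0 + (i + d)))) root).
  { intros i d. destruct (Hpre i d) as [q E]. rewrite E. rewrite app_nth1; auto. rewrite Hlen. lia. }
  exists (fun i => nth i (rp (A (a0 + i))) root). split; [split; [split|]|].
  - intros i j E. cbv beta in E.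
    rewrite (HC i j) in E. rewrite (HC j i) in E. replace (j + i) with (i + j) in E by lia.
    apply (proj1 (NoDup_nth (rp (A (a0 + (i + j)))) root)); auto.
    + apply (rp_spec V VT adj root Ht); auto.
    + rewrite Hlen; lia.
    + rewrite Hlen; lia.
  - intros i. cbv beta. rewrite (HC i 1), (HC (S i) 0). replace (S i + 0) with (i + 1) by lia.
    apply (chain_nth V adj). 
    + apply (rp_spec V VT adj root Ht); auto.
    + rewrite Hlen; lia.
  - cbv beta. rewrite Nat.add_0_r. apply (rp_nth0 V VT adj root Ht); auto.
  - exists a0, (length (rp (A a0)) - 1). intros i. cbv beta.
    rewrite (HC (length (rp (A a0)) - 1 + i) 0).
    destruct (Hpre i (length (rp (A a0)) - 1)) as [q E].
    replace (length (rp (A a0)) - 1 + i + 0) with (i + (length (rp (A a0)) - 1)) by lia.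
    rewrite E. rewrite app_nth1 by (rewrite Hlen; lia).
    replace (length (rp (A a0)) - 1 + i) with (length (rp (A (a0 + i))) - 1) by (rewrite Hlen; lia).
    rewrite nth_last' by (apply (rp_ne V VT adj root Ht); auto). symmetry.
    apply (rp_last V VT adj root Ht); auto.
Qed.

End Rays.

Section TreeExtra.
Variable V : Type.
Variable VT : V -> Prop.
Variable adj : V -> V -> Prop.
Variable root : V.
Hypothesis Ht : rooted_tree VT adj root.
Notation rp := (rp V VT adj root Ht).

Lemma rp_root : rp root = [root].
Proof.
  symmetry. apply (rp_uniq V VT adj root Ht). apply (rt_root VT adj root Ht).
  split; [reflexivity|split; [reflexivity|split]].
  - constructor; [intros []|constructor].
  - simpl; auto.
Qed.

Lemma child_toward x u : tle adj root x u -> x <> u ->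
  exists c q, rp u = rp x ++ c :: q /\ rp c = rp x ++ [c] /\ adj x c.
Proof.
  intros Hxu Hne. destruct (tle_VT V VT adj root Ht x u Hxu) as [Hx Hu].
  destruct (tle_prefix V VT adj root Ht x u Hxu) as [q0 E].
  destruct q0 as [|c q].
  - exfalso. apply Hne. apply (rp_inj V VT adj root Ht); auto. rewrite E, app_nil_r. auto.
  - exists c, q.
    assert (Hc : rp c = rp x ++ [c]).
    { symmetry. apply (rp_uniq V VT adj root Ht).
      - apply (rp_VT V VT adj root Ht u); auto. rewrite E. apply in_or_app. right. left. auto.
      - pose proof (rp_spec V VT adj root Ht u Hu) as Hp. rewrite E in Hp.
        replace (rp x ++ c :: q) with ((rp x ++ [c]) ++ q) in Hp by (rewrite <- app_assoc; auto).
        apply path_prefix in Hp.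
        + rewrite last_last in Hp. auto.
        + intros E'. apply app_eq_nil in E'. destruct E'; discriminate. }
    split; auto. split; auto.
    pose proof (rp_spec V VT adj root Ht c) as Hp.
    assert (Hvc : VT c) by (apply (rp_VT V VT adj root Ht u); auto; rewrite E; apply in_or_app; right; left; auto).
    destruct (Hp Hvc) as [_ [_ [_ Hch]]]. rewrite Hc in Hch.
    rewrite (app_removelast_last root (rp_ne V VT adj root Ht x Hx)) in Hch.
    rewrite (rp_last V VT adj root Ht x Hx) in Hch.
    rewrite <- app_assoc in Hch. simpl in Hch.
    apply chain_app_cons in Hch. destruct Hch as [_ [H _]]. auto.
Qed.

Lemma tle_trans x y z : tle adj root x y -> tle adj root y z -> tle adj root x z.
Proof.
  intros H1 H2. destruct (tle_VT V VT adj root Ht x y H1) as [Hx _].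
  destruct (tle_VT V VT adj root Ht y z H2) as [_ Hz].
  destruct (tle_prefix V VT adj root Ht x y H1) as [a E1].
  destruct (tle_prefix V VT adj root Ht y z H2) as [b E2].
  apply (prefix_tle V VT adj root Ht x z (a ++ b)); auto. rewrite E2, E1, app_assoc. auto.
Qed.

Lemma branch x c a y w : rp y = rp x ++ c :: a -> VT x -> tle adj root w y ->
  tle adj root w x \/ exists l1, rp w = rp x ++ c :: l1.
Proof.
  intros Ey Hx Hw. destruct (tle_VT V VT adj root Ht w y Hw) as [Hvw _].
  destruct (tle_prefix V VT adj root Ht w y Hw) as [s1 E1].
  rewrite Ey in E1. symmetry in E1. apply app_eq_app in E1.
  destruct E1 as [l [[E2 E3]|[E2 E3]]].
  - destruct l as [|c' l1].
    + left. apply (prefix_tle V VT adj root Ht w x []); auto. rewrite E2, !app_nil_r. auto.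
    + right. simpl in E3. inversion E3; subst. exists l1. auto.
  - left. apply (prefix_tle V VT adj root Ht w x l); auto.
Qed.

End TreeExtra.

Section Main.
Variable V : Type.
Variable F : (V -> Prop) -> Prop.
Variable VT : V -> Prop.
Variable adj : V -> V -> Prop.
Variable root : V.
Hypothesis HF : connectoid F.
Hypothesis Hnt : normal_tree F VT adj root.

Lemma Htree : rooted_tree VT adj root.
Proof. destruct Hnt as [[H _] _]. exact H. Qed.

Notation rp := (rp V VT adj root Htree).
Notation RR := (RR V adj root).
Notation Rooted := (Rooted V adj root).

Definition rep (om : tend adj) : nat -> V :=
  proj1_sig (constructive_indefinite_description _ (proj2_sig om)).

Lemma rep_spec om : ray adj (rep om) /\
  forall R', proj1_sig om R' <-> ray adj R' /\ ray_equiv adj (rep om) R'.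
Proof. unfold rep. destruct (constructive_indefinite_description _ _) as [R HR]. simpl. exact HR. Qed.

Definition can (om : tend adj) : nat -> V :=
  proj1_sig (constructive_indefinite_description _
    (rooted_exists V VT adj root Htree (rep om) (proj1 (rep_spec om)))).

Lemma can_spec om : Rooted (rep om) (can om).
Proof. unfold can. destruct (constructive_indefinite_description _ _) as [C HC]. simpl. exact HC. Qed.

Lemma can_RR om : RR (can om).
Proof. apply (can_spec om). Qed.

Lemma Rooted_self R : RR R -> Rooted R R.
Proof. intros H. split; auto. exists 0, 0. auto. Qed.

Lemma tend_char om R' : proj1_sig om R' <-> ray adj R' /\ Rooted R' (can om).
Proof.
  destruct (rep_spec om) as [Hrep HE]. rewrite HE. split.
  - intros [HR' Heq]. split; auto.
    destruct (rooted_exists V VT adj root Htree R' HR') as [C' HC'].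
    rewrite (rooted_uniq V VT adj root Htree (rep om) R' (can om) C' Hrep HR' Heq (can_spec om) HC').
    auto.
  - intros [HR' HC]. split; auto. apply (rooted_equiv V adj root (rep om) R' (can om)); auto.
    apply can_spec.
Qed.

Lemma tend_ext (om1 om2 : tend adj) : (forall R', proj1_sig om1 R' <-> proj1_sig om2 R') -> om1 = om2.
Proof.
  destruct om1 as [E1 P1], om2 as [E2 P2]. simpl. intros H.
  assert (E1 = E2).
  { apply functional_extensionality. intros R. apply propositional_extensionality. auto. }
  subst. f_equal. apply proof_irrelevance.
Qed.

Lemma can_of_RR om R : proj1_sig om R -> R 0 = root -> R = can om.
Proof.
  intros HR H0. apply tend_char in HR. destruct HR as [Hray HRC].
  assert (HRR : RR R) by (split; auto).
  apply (rooted_uniq V VT adj root Htree R R R (can om)); auto.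
  - apply (rooted_equiv V adj root R R R); apply Rooted_self; auto.
  - apply Rooted_self; auto.
Qed.

Definition neckN (om : tend adj) : V -> Prop :=
  proj1_sig (constructive_indefinite_description _
    (proj2 Hnt (can om) (proj1 (can_RR om)) (proj2 (can_RR om)))).

Lemma neckN_spec om : necklace F (neckN om) /\ finite_set (setminus (ray_set (can om)) (neckN om)).
Proof. unfold neckN. destruct (constructive_indefinite_description _ _) as [N HN]. simpl. exact HN. Qed.

Definition eta (om : tend adj) : cend F := cls V F (neckN om) (proj1 (neckN_spec om)).

Lemma eta_conv om : converges F (ray_set (can om)) (eta om).
Proof.
  apply conv_cls; auto.
  - apply inj_infinite. apply (proj1 (proj1 (can_RR om))).
  - apply neckN_spec.
Qed.

Lemma conv_eventually (C : nat -> V) nu : (forall n m, C n = C m -> n = m) ->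
  converges F (ray_set C) nu -> forall X, finite_set X ->
  exists D, KX F X nu D /\ exists n0, forall k, n0 <= k -> D (C k).
Proof.
  intros Hinj [_ Hc] X HX. destruct (Hc X HX) as [D [HD Hf]].
  exists D. split; auto.
  destruct (inj_avoid C _ Hf Hinj) as [n0 Hn0]. exists n0. intros k Hk.
  apply NNPP. intros Hno. apply (Hn0 k Hk). split; auto. exists k. auto.
Qed.

Lemma Anc_fin v : VT v -> finite_set (fun x => tle adj root x v).
Proof.
  intros Hv. apply fin_sub with (B := fun x => In x (rp v)). apply fin_list.
  intros x Hx. apply (tle_iff V VT adj root Htree); auto.
Qed.

Lemma KX_notin X nu D x : KX F X nu D -> D x -> ~ X x.
Proof. intros HD Dx. apply (comp_sub _ _ _ _ (KX_comp _ _ _ _ _ HD) x Dx). Qed.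

Lemma weak1 C u v : connected F C -> C u -> C v -> VT u -> VT v ->
  ~ tle adj root u v -> ~ tle adj root v u ->
  exists w, C w /\ tle adj root w u /\ tle adj root w v.
Proof. destruct Hnt as [[_ [H _]] _]. apply H. Qed.

Lemma eta_inj om1 om2 : eta om1 = eta om2 -> om1 = om2.
Proof.
  intros Eeta.
  assert (EC : can om1 = can om2).
  { pose proof (can_RR om1) as HC1. pose proof (can_RR om2) as HC2.
    apply functional_extensionality. intros j0. apply NNPP. intros Hne0.
    destruct (min_nat (fun j => can om1 j <> can om2 j)) as [j [Hj Hmin]]; [eauto|].
    destruct j as [|j'].
    { apply Hj. rewrite (proj2 HC1), (proj2 HC2). auto. }
    set (X := fun x => tle adj root x (can om1 j')).
    assert (HX : finite_set X) by (apply Anc_fin; apply (RR_VT V VT adj root Htree); auto).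
    destruct (conv_eventually _ _ (proj1 (proj1 HC1)) (eta_conv om1) X HX) as [D1 [HD1 [n1 Hn1]]].
    pose proof (eta_conv om2) as Hc2. rewrite <- Eeta in Hc2.
    destruct (conv_eventually _ _ (proj1 (proj1 HC2)) Hc2 X HX) as [D2 [HD2 [n2 Hn2]]].
    set (a := n1 + n2 + S j').
    assert (Hu : D1 (can om1 a)) by (apply Hn1; unfold a; lia).
    assert (Hv : D1 (can om2 a)).
    { apply (comp_meet _ _ HF _ D1 D2 (KX_comp _ _ _ _ _ HD1) (KX_comp _ _ _ _ _ HD2)).
      - apply (KX_meet _ _ HF (eta om1) X X D1 D2); auto.
      - apply Hn2. unfold a; lia. }
    assert (Hbad : forall i, S j' <= i -> can om1 i = can om2 i -> False).
    { intros i Hi E. destruct (RR_meet V VT adj root Htree _ _ HC1 HC2 i i E) as [_ Hall].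
      apply Hj. apply Hall. auto. }
    destruct (weak1 D1 (can om1 a) (can om2 a)) as [w [Dw [Hw1 Hw2]]]; auto.
    - apply (comp_conn _ _ _ _ (KX_comp _ _ _ _ _ HD1)).
    - apply (RR_VT V VT adj root Htree); auto.
    - apply (RR_VT V VT adj root Htree); auto.
    - intros H. apply (RR_tle V VT adj root Htree _ HC2) in H. destruct H as [i [Hi E]].
      destruct (RR_meet V VT adj root Htree _ _ HC1 HC2 a i E) as [Ea Hall].
      apply (Hbad a); [unfold a; lia|]. apply Hall. lia.
    - intros H. apply (RR_tle V VT adj root Htree _ HC1) in H. destruct H as [i [Hi E]].
      destruct (RR_meet V VT adj root Htree _ _ HC2 HC1 a i E) as [Ea Hall].
      apply (Hbad a); [unfold a; lia|]. symmetry. apply Hall. lia.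
    - apply (RR_tle V VT adj root Htree _ HC1) in Hw1. destruct Hw1 as [i1 [Hi1 E1]].
      apply (RR_tle V VT adj root Htree _ HC2) in Hw2. destruct Hw2 as [i2 [Hi2 E2]].
      rewrite E1 in E2. destruct (RR_meet V VT adj root Htree _ _ HC1 HC2 i1 i2 E2) as [Ei Hall].
      destruct (le_lt_dec (S j') i1) as [Hge|Hlt].
      + apply (Hbad i1); [auto|apply Hall; lia].
      + apply (KX_notin X _ D1 w HD1 Dw). unfold X.
        apply (RR_tle V VT adj root Htree _ HC1). exists i1. split; [lia|auto]. }
  apply tend_ext. intros R'. rewrite !tend_char. rewrite EC. tauto.
Qed.

Section Surj.
Variable nu : cend F.
Hypothesis Hcl : in_closure F VT nu.

Definition Anc (v : V) : V -> Prop := fun x => tle adj root x v.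

Definition Pstep (v c : V) : Prop :=
  adj v c /\ rp c = rp v ++ [c] /\
  exists D, KX F (Anc v) nu D /\ exists u, D u /\ VT u /\ tle adj root c u.

Definition step (v : V) : V := epsilon (inhabits root) (Pstep v).

Definition tt (k : nat) : V := Nat.iter k step root.

Definition Iinv (k : nat) : Prop :=
  VT (tt k) /\ forall D, KX F (Anc (tt k)) nu D -> forall u, D u -> VT u ->
    tle adj root (tt k) u /\ u <> tt k.

Lemma I0 : Iinv 0.
Proof.
  split; [apply (rt_root VT adj root Htree)|].
  intros D HD u Du Vu. simpl. split.
  - apply (tle_iff V VT adj root Htree); auto. apply (rp_root_in V VT adj root Htree); auto.
  - intros E. subst u. apply (KX_notin _ _ _ _ HD Du). apply (tle_refl V VT adj root Htree).
    apply (rt_root VT adj root Htree).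
Qed.

Lemma Istep k : Iinv k -> Pstep (tt k) (tt (S k)) /\ Iinv (S k).
Proof.
  intros [Hvt HIk].
  assert (HP : Pstep (tt k) (tt (S k))).
  { change (tt (S k)) with (step (tt k)). unfold step. apply epsilon_spec.
    destruct (Hcl (Anc (tt k)) (Anc_fin _ Hvt)) as [D [HD [u [Du Vu]]]].
    destruct (HIk D HD u Du Vu) as [Hle Hne].
    destruct (child_toward V VT adj root Htree _ _ Hle (fun E => Hne (eq_sym E))) as [c [q [Eu [Ec Hadj]]]].
    exists c. split; auto. split; auto. exists D. split; auto. exists u. split; auto. split; auto.
    apply (prefix_tle V VT adj root Htree c u q).
    - apply (rt_dom VT adj root Htree _ _ Hadj).
    - auto.
    - rewrite Eu, Ec, <- app_assoc. auto. }
  split; auto.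
  destruct HP as [Hadj [Ec [D [HD [u [Du [Vu Hcu]]]]]]].
  set (c := tt (S k)) in *.
  assert (Hvc : VT c) by (apply (rt_dom VT adj root Htree _ _ Hadj)).
  split; auto. intros D' HD' u' Du' Vu'.
  assert (Hsub : subset D' D).
  { apply (KX_mono _ _ HF nu (Anc (tt k)) (Anc c)); auto; try apply Anc_fin; auto.
    intros x Hx. unfold Anc in *. apply (tle_trans V VT adj root Htree x (tt k) c); auto.
    apply (prefix_tle V VT adj root Htree _ _ [c]); auto. }
  destruct (HIk D HD u' (Hsub u' Du') Vu') as [Hle Hne].
  assert (Hne' : u' <> c).
  { intros E. subst u'. apply (KX_notin _ _ _ _ HD' Du'). apply (tle_refl V VT adj root Htree); auto. }
  split; auto.
  destruct (child_toward V VT adj root Htree _ _ Hle (fun E => Hne (eq_sym E))) as [c' [q' [Eu' [Ec' Hadj']]]].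
  destruct (classic (c' = c)) as [Ecc|Hcc].
  - subst c'. apply (prefix_tle V VT adj root Htree c u' q'); auto. rewrite Eu', Ec, <- app_assoc. auto.
  - exfalso.
    destruct (tle_prefix V VT adj root Htree c u Hcu) as [a Ea].
    assert (Eu : rp u = rp (tt k) ++ c :: a) by (rewrite Ea, Ec, <- app_assoc; auto).
    destruct (weak1 D u u') as [w [Dw [Hw1 Hw2]]]; auto.
    + apply (comp_conn _ _ _ _ (KX_comp _ _ _ _ _ HD)).
    + intros H. destruct (branch V VT adj root Htree _ _ _ _ _ Eu' Hvt (tle_trans V VT adj root Htree _ _ _ Hcu H)) as [H1|[l1 E1]].
      * destruct (tle_prefix V VT adj root Htree _ _ H1) as [q Eq]. rewrite Ec in Eq.
        apply (f_equal (@length V)) in Eq. rewrite !length_app in Eq. simpl in Eq. lia.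
      * rewrite Ec in E1. apply app_inv_head in E1.
        inversion E1. auto.
    + intros H. destruct (branch V VT adj root Htree _ _ _ _ _ Eu Hvt H) as [H1|[l1 E1]].
      * apply (KX_notin _ _ _ _ HD (Hsub u' Du')). auto.
      * rewrite Eu' in E1. apply app_inv_head in E1. inversion E1. auto.
    + destruct (branch V VT adj root Htree _ _ _ _ _ Eu Hvt Hw1) as [H1|[l1 E1]].
      * apply (KX_notin _ _ _ _ HD Dw). auto.
      * destruct (branch V VT adj root Htree _ _ _ _ _ Eu' Hvt Hw2) as [H2|[l2 E2]].
        -- apply (KX_notin _ _ _ _ HD Dw). auto.
        -- rewrite E1 in E2. apply app_inv_head in E2. inversion E2. auto.
Qed.

Lemma Iall : forall k, Iinv k /\ Pstep (tt k) (tt (S k)).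
Proof.
  induction k as [|k IH].
  - split; [apply I0|apply (Istep 0 I0)].
  - destruct IH as [IH _]. destruct (Istep k IH) as [_ HI]. split; auto. apply Istep; auto.
Qed.

Lemma tt_len k : length (rp (tt k)) = S k.
Proof.
  induction k as [|k IH].
  - simpl. rewrite (rp_root V VT adj root Htree). auto.
  - destruct (Iall k) as [_ [_ [E _]]]. rewrite E, length_app, IH. simpl. lia.
Qed.

Lemma tt_RR : RR tt.
Proof.
  split; [split|reflexivity].
  - intros n m E. pose proof (tt_len n) as H1. rewrite E, tt_len in H1. lia.
  - intros n. destruct (Iall n) as [_ [H _]]. auto.
Qed.

Lemma tt_visits X D : finite_set X -> KX F X nu D -> forall k, exists j, k < j /\ D (tt j).
Proof.
  intros HX HD k.
  pose proof tt_RR as HR.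
  destruct (Iall k) as [[Hvk HIk] _].
  set (Z := fun x => X x \/ Anc (tt k) x).
  assert (HZ : finite_set Z) by (apply fin_union; auto; apply Anc_fin; auto).
  destruct (Hcl Z HZ) as [DZ [HDZ [u [DZu Vu]]]].
  assert (HsubX : subset DZ D).
  { apply (KX_mono _ _ HF nu X Z); auto. intros x Hx. left. auto. }
  destruct (KX_exists _ _ HF nu (Anc (tt k)) (Anc_fin _ Hvk)) as [Dk HDk].
  assert (HsubK : subset DZ Dk).
  { apply (KX_mono _ _ HF nu (Anc (tt k)) Z); auto; try apply Anc_fin; auto. intros x Hx. right. auto. }
  destruct (HIk Dk HDk u (HsubK u DZu) Vu) as [Hku Hneu].
  destruct (classic (exists j, u = tt j)) as [[j Ej]|Hno].
  - subst u. exists j. split; auto.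
    apply (RR_tle V VT adj root Htree _ HR) in Hku. destruct Hku as [i [Hi Ei]].
    apply (proj1 (proj1 HR)) in Ei. subst i.
    destruct (Nat.eq_dec k j); [subst; congruence|lia].
  - set (h := length (rp u) - 1).
    assert (Hlu : length (rp u) = S h).
    { unfold h. destruct (rp u) eqn:E; [exfalso; eapply (rp_ne V VT adj root Htree); eauto|simpl; lia]. }
    destruct (Iall h) as [[Hvh HIh] _].
    set (Z' := fun x => Z x \/ Anc (tt h) x).
    assert (HZ' : finite_set Z') by (apply fin_union; auto; apply Anc_fin; auto).
    destruct (Hcl Z' HZ') as [D' [HD' [u' [D'u' Vu']]]].
    assert (Hsub' : subset D' DZ).
    { apply (KX_mono _ _ HF nu Z Z'); auto. intros x Hx. left. auto. }
    destruct (KX_exists _ _ HF nu (Anc (tt h)) (Anc_fin _ Hvh)) as [Dh HDh].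
    assert (HsubH : subset D' Dh).
    { apply (KX_mono _ _ HF nu (Anc (tt h)) Z'); auto; try apply Anc_fin; auto. intros x Hx. right. auto. }
    destruct (HIh Dh HDh u' (HsubH u' D'u') Vu') as [Hhu' Hneu'].
    destruct (tle_prefix V VT adj root Htree _ _ Hhu') as [r Er].
    assert (Hr : r <> []).
    { intros E. subst r. rewrite app_nil_r in Er. apply Hneu'.
      apply (rp_inj V VT adj root Htree); auto. }
    destruct (weak1 DZ u u') as [w [Dw [Hw1 Hw2]]]; auto.
    + apply (comp_conn _ _ _ _ (KX_comp _ _ _ _ _ HDZ)).
    + intros H. destruct (tle_prefix V VT adj root Htree _ _ H) as [s Es].
      rewrite Es in Er. apply app_eq_app in Er. destruct Er as [l [[E1 E2]|[E1 E2]]].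
      * assert (Hl : length l = 0).
        { pose proof (f_equal (@length V) E1) as L1. rewrite length_app, Hlu, tt_len in L1. lia. }
        destruct l; [|discriminate]. rewrite app_nil_r in E1.
        apply Hno. exists h. apply (rp_inj V VT adj root Htree); auto.
      * assert (Hl : length l = 0).
        { pose proof (f_equal (@length V) E1) as L1. rewrite length_app, Hlu, tt_len in L1. lia. }
        destruct l; [|discriminate]. rewrite app_nil_r in E1.
        apply Hno. exists h. apply (rp_inj V VT adj root Htree); auto.
    + intros H. destruct (tle_prefix V VT adj root Htree _ _ H) as [s Es].
      apply (f_equal (@length V)) in Es. apply (f_equal (@length V)) in Er.
      rewrite length_app in Es, Er. rewrite tt_len in Er.
      destruct r; [congruence|]. simpl in Er. lia.
    + destruct (tle_prefix V VT adj root Htree _ _ Hw2) as [s1 Es1].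
      destruct (tle_prefix V VT adj root Htree _ _ Hw1) as [s2 Es2].
      rewrite Es1 in Er. apply app_eq_app in Er. destruct Er as [l [[E1 E2]|[E1 E2]]].
      *
        exfalso.
        pose proof (f_equal (@length V) E1) as L1. pose proof (f_equal (@length V) Es2) as L2.
        rewrite length_app in L1, L2. rewrite tt_len in L1.
        assert (Hl0 : length l = 0) by lia. assert (Hs0 : length s2 = 0) by lia.
        destruct l; [|discriminate]. destruct s2; [|discriminate].
        rewrite app_nil_r in E1, Es2.
        apply Hno. exists h. apply (rp_inj V VT adj root Htree); auto. congruence.
      *
        assert (Hwh : tle adj root w (tt h)).
        { apply (prefix_tle V VT adj root Htree _ _ l); auto.
          apply (tle_VT V VT adj root Htree w u Hw1). }
        apply (RR_tle V VT adj root Htree _ HR) in Hwh. destruct Hwh as [i [Hi Ei]].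
        subst w. exists i. split.
        -- destruct (le_lt_dec i k) as [Hik|Hik]; auto. exfalso.
           apply (KX_notin _ _ _ _ HDZ Dw). right. unfold Anc.
           apply (RR_tle V VT adj root Htree _ HR). exists i. split; auto.
        -- apply HsubX. auto.
Qed.

End Surj.

Lemma main_lemma :
  exists eta : tend adj -> cend F,
    (forall (om : tend adj) (R : nat -> V), proj1_sig om R -> R 0 = root ->
       converges F (ray_set R) (eta om) /\
       (forall nu : cend F, converges F (ray_set R) nu -> nu = eta om)) /\
    (forall om, in_closure F VT (eta om)) /\
    (forall om1 om2, eta om1 = eta om2 -> om1 = om2) /\
    (forall nu : cend F, in_closure F VT nu -> exists om, eta om = nu).
Proof.
  exists eta. split; [|split; [|split]].
  - intros om R HR HR0. rewrite (can_of_RR om R HR HR0). split; [apply eta_conv|].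
    intros mu Hmu. apply (conv_unique _ _ HF _ _ _ Hmu (eta_conv om)).
  - intros om X HX.
    destruct (conv_eventually _ _ (proj1 (proj1 (can_RR om))) (eta_conv om) X HX) as [D [HD [n0 Hn0]]].
    exists D. split; auto. exists (can om n0). split; auto.
    apply (RR_VT V VT adj root Htree). apply can_RR.
  - apply eta_inj.
  - intros nu Hcl.
    pose proof (tt_RR nu Hcl) as HR.
    set (t := tt nu) in *.
    exists (exist (fun E : (nat -> V) -> Prop => exists R, ray adj R /\
              forall R', E R' <-> (ray adj R' /\ ray_equiv adj R R'))
            (fun R' => ray adj R' /\ ray_equiv adj t R')
            (ex_intro _ t (conj (proj1 HR) (fun R' => iff_refl _)))).
    match goal with |- eta ?o = _ => set (om := o) end.
    assert (Ecan : t = can om).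
    { apply can_of_RR; [|apply HR]. simpl. split; [apply HR|].
      apply (rooted_equiv V adj root t t t); apply Rooted_self; auto. }
    apply cend_ext; auto. intros X HX.
    destruct (conv_eventually _ _ (proj1 (proj1 (can_RR om))) (eta_conv om) X HX) as [D1 [HD1 [n1 Hn1]]].
    destruct (KX_exists _ _ HF nu X HX) as [D2 HD2].
    destruct (tt_visits nu Hcl X D2 HX HD2 n1) as [j [Hj Dj]].
    exists D1, D2. split; auto. split; auto. exists (t j). split; auto.
    rewrite Ecan. apply Hn1. lia.
Qed.

End Main.

Theorem theorem5p2 (V : Type) (F : (V -> Prop) -> Prop) (VT : V -> Prop)
  (adj : V -> V -> Prop) (root : V) :
  connectoid F -> normal_tree F VT adj root ->
  exists eta : tend adj -> cend F,
    (forall (om : tend adj) (R : nat -> V), proj1_sig om R -> R 0 = root ->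
       converges F (ray_set R) (eta om) /\
       (forall nu : cend F, converges F (ray_set R) nu -> nu = eta om)) /\
    (forall om, in_closure F VT (eta om)) /\
    (forall om1 om2, eta om1 = eta om2 -> om1 = om2) /\
    (forall nu : cend F, in_closure F VT nu -> exists om, eta om = nu).
Proof.
  intros HF Hnt. exact (main_lemma V F VT adj root HF Hnt).
Qed.
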